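(* Let $F$ be an algebraically closed field with $\operatorname{char}F>3$, $R=F[[x,y]]$, and let $f=(f_1,f_2)\in R^2$ be a unimodal isolated complete intersection singularity with $\operatorname{ord}(f_1)=3$ and $\operatorname{ord}(f_2)\ge 3$. Then the $3$-jet $j_3(f)$ is contact equivalent (under the $3$-jet contact group acting on $R^2/\mathfrak m^4R^2$) to one of $(x^3,0)$, $(x^3,x^2y)$, $(x^3,xy^2)$, $(x^3,y^3+x^2y)$, $(x^3,y^3)$, $(x^2y,0)$, $(x^2y,xy^2)$, $(x^2y,x^3+xy^2)$, $(x^3+x^2y,\,y^3+\lambda x^2y)$ with $\lambda\neq 0$, $(x^2y,x^3+y^3)$, $(x^3+xy^2,0)$.
   Context: $\mathfrak m=\langle x,y\rangle$. $f=(f_1,f_2)\in R^2$ with $f_i\in\mathfrak m$ is an ICIS if $f_1,f_2$ is a regular sequence and $\mathfrak m^k\subset\langle f_1,f_2\rangle+I_2(J(f))$ for some $k$. $j_3(f)$ is the image of $f$ in $J_3=R^2/\mathfrak m^4R^2$; the contact jet group $\mathcal K_3=\{(j_3(U),j_3(\phi))\}$ ($U\in GL(2,R)$, $\phi\in\operatorname{Aut}(R)$) acts by $j_3(f)\mapsto j_3(U\cdot\phi(f))$. Unimodal means $\mathcal K$-modality $1$, the $\mathcal K$-modality being the modality (Arnold, Greuel–Nguyen) of a sufficiently high jet under the contact jet group action. *)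

(* Defs.v *)
From HB Require Import structures.
From mathcomp Require Import all_boot all_order all_algebra.
Set Implicit Arguments. Unset Strict Implicit. Unset Printing Implicit Defensive.
Import GRing.Theory.
Local Open Scope ring_scope.

Section PowerSeries.
Variable F : fieldType.

(* f i j = coefficient of x^i y^j in f ∈ R = F[[x,y]] *)
Definition ps := nat -> nat -> F.
Definition ps_eq (f g : ps) := forall i j, f i j = g i j.

Definition ps0 : ps := fun _ _ => 0.
Definition psmon (a b : nat) : ps :=
  fun i j => if (i == a) && (j == b) then 1 else 0.
Definition ps1 : ps := psmon 0 0.
Definition psadd (f g : ps) : ps := fun i j => f i j + g i j.
Definition psopp (f : ps) : ps := fun i j => - f i j.
Definition pssub (f g : ps) : ps := psadd f (psopp g).
Definition psscale (c : F) (f : ps) : ps := fun i j => c * f i j.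
Definition psmul (f g : ps) : ps :=
  fun i j => \sum_(a < i.+1) \sum_(b < j.+1) f a b * g (i - a)%N (j - b)%N.
Definition psexp (f : ps) (n : nat) : ps := iter n (psmul f) ps1.
Definition psdx (f : ps) : ps := fun i j => i.+1%:R * f i.+1 j.
Definition psdy (f : ps) : ps := fun i j => j.+1%:R * f i j.+1.
(* substitution f(u,v), for u, v in the maximal ideal (finite sums then) *)
Definition pscomp (f u v : ps) : ps :=
  fun i j => \sum_(a < (i + j).+1) \sum_(b < ((i + j).+1 - a)%N)
               f a b * psmul (psexp u a) (psexp v b) i j.

Definition in_m (f : ps) := f 0%N 0%N = 0.
Definition in_mpow (k : nat) (f : ps) := forall i j, (i + j < k)%N -> f i j = 0.
Definition ps_ord_eq (f : ps) (k : nat) :=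
  in_mpow k f /\ exists i j, (i + j = k)%N /\ f i j != 0.
Definition ps_ord_ge (f : ps) (k : nat) := in_mpow k f.

Definition ps2 := (ps * ps)%type.
Definition ps2_eq (f g : ps2) := ps_eq f.1 g.1 /\ ps_eq f.2 g.2.

Definition nonzerodivisor (f : ps) :=
  forall g, ps_eq (psmul f g) ps0 -> ps_eq g ps0.
Definition nzd_mod (f1 f2 : ps) :=
  forall g, (exists a, ps_eq (psmul f2 g) (psmul a f1)) ->
            exists b, ps_eq g (psmul b f1).
Definition in_ideal2 (g f1 f2 : ps) :=
  exists a b, ps_eq g (psadd (psmul a f1) (psmul b f2)).
Definition regular_seq (f1 f2 : ps) :=
  [/\ nonzerodivisor f1, nzd_mod f1 f2 & ~ in_ideal2 ps1 f1 f2].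

(* 2x2 minor of the Jacobian matrix; I_2(J(f)) is generated by it *)
Definition jacdet (f : ps2) : ps :=
  pssub (psmul (psdx f.1) (psdy f.2)) (psmul (psdy f.1) (psdx f.2)).

Definition ICIS (f : ps2) :=
  [/\ in_m f.1, in_m f.2, regular_seq f.1 f.2 &
      exists k, forall g, in_mpow k g ->
        exists a b c, ps_eq g (psadd (psadd (psmul a f.1) (psmul b f.2))
                                    (psmul c (jacdet f)))].

(* GL(2,R): 2x2 matrices over R with unit determinant *)
Record mat2 := Mat2 { m11 : ps; m12 : ps; m21 : ps; m22 : ps }.
Definition GL2 (U : mat2) :=
  pssub (psmul (m11 U) (m22 U)) (psmul (m12 U) (m21 U)) 0%N 0%N != 0.
(* Aut(R): the F-algebra automorphisms x |-> u, y |-> v, with u,v in m and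
   invertible linear part *)
Definition autR (phi : ps2) :=
  [/\ in_m phi.1, in_m phi.2 &
      phi.1 1%N 0%N * phi.2 0%N 1%N - phi.1 0%N 1%N * phi.2 1%N 0%N != 0].

Definition cact (U : mat2) (phi : ps2) (f : ps2) : ps2 :=
  let g1 := pscomp f.1 phi.1 phi.2 in
  let g2 := pscomp f.2 phi.1 phi.2 in
  (psadd (psmul (m11 U) g1) (psmul (m12 U) g2),
   psadd (psmul (m21 U) g1) (psmul (m22 U) g2)).

(* k-jets: J_k = R^2 / m^(k+1) R^2, realised as truncated pairs *)
Definition jet (k : nat) (f : ps2) : ps2 :=
  (fun i j => if (i + j <= k)%N then f.1 i j else 0,
   fun i j => if (i + j <= k)%N then f.2 i j else 0).
Definition in_Jk (k : nat) (p : ps2) := ps2_eq (jet k p) p.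

Definition Kequiv (k : nat) (f g : ps2) :=
  exists U phi, [/\ GL2 U, autR phi & ps2_eq (jet k (cact U phi f)) (jet k g)].

Definition orbit (k : nat) (p : ps2) : ps2 -> Prop :=
  fun q => exists U phi, [/\ GL2 U, autR phi & ps2_eq q (jet k (cact U phi p))].

Inductive polyfun : (ps2 -> F) -> Prop :=
| pf_const (c : F) : polyfun (fun _ => c)
| pf_coord1 (i j : nat) : polyfun (fun p => p.1 i j)
| pf_coord2 (i j : nat) : polyfun (fun p => p.2 i j)
| pf_add h1 h2 : polyfun h1 -> polyfun h2 -> polyfun (fun p => h1 p + h2 p)
| pf_mul h1 h2 : polyfun h1 -> polyfun h2 -> polyfun (fun p => h1 p * h2 p).

Definition subset (A B : ps2 -> Prop) := forall p, A p -> B p.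
Definition zclosed (C : ps2 -> Prop) :=
  exists S : (ps2 -> F) -> Prop, (forall h, S h -> polyfun h) /\
    forall p, C p <-> (forall h, S h -> h p = 0).
Definition zopen (O : ps2 -> Prop) := zclosed (fun p => ~ O p).
Definition zirred (Z : ps2 -> Prop) :=
  [/\ zclosed Z, exists p, Z p &
      forall Z1 Z2, zclosed Z1 -> zclosed Z2 ->
        subset Z (fun p => Z1 p \/ Z2 p) -> subset Z Z1 \/ subset Z Z2].
Definition zclosure (A : ps2 -> Prop) : ps2 -> Prop :=
  fun p => forall C, zclosed C -> subset A C -> C p.
(* dim A >= n : a chain Z_0 < ... < Z_n of irreducible closed subsets of the
   Zariski closure of A (dim A = Krull dim of its closure) *)
Definition dim_ge (A : ps2 -> Prop) (n : nat) :=
  exists Z : nat -> ps2 -> Prop,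
    (forall l, (l <= n)%N -> zirred (Z l) /\ subset (Z l) (zclosure A)) /\
    (forall l, (l < n)%N -> subset (Z l) (Z l.+1) /\ ~ subset (Z l.+1) (Z l)).
Definition dim_eq (A : ps2 -> Prop) (n : nat) := dim_ge A n /\ ~ dim_ge A n.+1.

Definition orbstrat (k i : nat) : ps2 -> Prop :=
  fun q => in_Jk k q /\ dim_eq (orbit k q) i.
Definition Kinvariant (k : nat) (U : ps2 -> Prop) :=
  forall p q, U p -> orbit k p q -> U q.
Definition inv_nbhd (k : nat) (U : ps2 -> Prop) (p : ps2) :=
  [/\ exists O, zopen O /\ forall q, U q <-> (in_Jk k q /\ O q),
      U p & Kinvariant k U].
Definition modU_le (k : nat) (U : ps2 -> Prop) (m : nat) :=
  forall i d, dim_ge (fun q => U q /\ orbstrat k i q) d -> (d <= m + i)%N.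
Definition modality_eq (k : nat) (p : ps2) (m : nat) :=
  (exists U, inv_nbhd k U p /\ modU_le k U m) /\
  (forall U m', inv_nbhd k U p -> modU_le k U m' -> (m <= m')%N).
Definition Kmodality (f : ps2) (m : nat) :=
  exists k0, forall k, (k0 <= k)%N -> modality_eq k (jet k f) m.
Definition unimodal (f : ps2) := Kmodality f 1.

Definition pX3 := psmon 3 0.
Definition pX2Y := psmon 2 1.
Definition pXY2 := psmon 1 2.
Definition pY3 := psmon 0 3.
Definition normal_form3 (g : ps2) :=
  ps2_eq g (pX3, ps0) \/
  ps2_eq g (pX3, pX2Y) \/
  ps2_eq g (pX3, pXY2) \/
  ps2_eq g (pX3, psadd pY3 pX2Y) \/
  ps2_eq g (pX3, pY3) \/
  ps2_eq g (pX2Y, ps0) \/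
  ps2_eq g (pX2Y, pXY2) \/
  ps2_eq g (pX2Y, psadd pX3 pXY2) \/
  (exists2 lam : F, lam != 0 &
     ps2_eq g (psadd pX3 pX2Y, psadd pY3 (psscale lam pX2Y))) \/
  ps2_eq g (pX2Y, psadd pX3 pY3) \/
  ps2_eq g (psadd pX3 pXY2, ps0).

End PowerSeries.

(* Main.v *)
Require Import Defs.
From HB Require Import structures.
From mathcomp Require Import all_boot all_order all_algebra.
From mathcomp Require Import ring zify.
From Stdlib Require Import Classical_Prop.
Set Implicit Arguments. Unset Strict Implicit. Unset Printing Implicit Defensive.
Import GRing.Theory.
Local Open Scope ring_scope.

Section PS.
Variable F : fieldType.
Implicit Types f g h : ps F.

Lemma psmul_addl f g h i j : psmul (psadd f g) h i j = psmul f h i j + psmul g h i j.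
Proof.
rewrite /psmul /psadd -big_split /=; apply: eq_bigr => a _.
rewrite -big_split /=; apply: eq_bigr => b _; exact: mulrDl.
Qed.

Lemma psmul_scalel c f h i j : psmul (psscale c f) h i j = c * psmul f h i j.
Proof.
rewrite /psmul /psscale mulr_sumr; apply: eq_bigr => a _.
rewrite mulr_sumr; apply: eq_bigr => b _; by rewrite mulrA.
Qed.

Lemma psmul_mon p q h i j :
  psmul (psmon F p q) h i j = if (p <= i)%N && (q <= j)%N then h (i - p)%N (j - q)%N else 0.
Proof.
rewrite /psmul /psmon.
transitivity (\sum_(a < i.+1 | nat_of_ord a == p)
   \sum_(b < j.+1 | nat_of_ord b == q) h (i - a)%N (j - b)%N).
  rewrite [RHS]big_mkcond; apply: eq_bigr => a _; case: eqP => _ /=.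
    rewrite [RHS]big_mkcond; apply: eq_bigr => b _; case: eqP => _; by rewrite ?mul1r ?mul0r.
  by rewrite big1 // => b _; rewrite mul0r.
rewrite (big_ord1_eq _ (fun a => \sum_(b < j.+1 | nat_of_ord b == q) h (i - a)%N (j - b)%N)).
rewrite (big_ord1_eq _ (fun b => h (i - p)%N (j - b)%N)) ltnS ltnS.
by case: (p <= i)%N; case: (q <= j)%N.
Qed.

Definition lin (a b : F) : ps F := psadd (psscale a (psmon F 1 0)) (psscale b (psmon F 0 1)).

Lemma psmul_lin a b h i j : psmul (lin a b) h i j =
  (if i is i'.+1 then a * h i' j else 0) + (if j is j'.+1 then b * h i j' else 0).
Proof.
rewrite /lin psmul_addl !psmul_scalel !psmul_mon.
case: i => [|i]; case: j => [|j] /=; rewrite ?mulr0 ?subn0 ?subSS ?subn0 //.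
Qed.

Lemma psexp_lin a b n i j : psexp (lin a b) n i j =
  if (i + j == n)%N then 'C(n, i)%:R * (a ^+ i * b ^+ j) else 0.
Proof.
elim: n i j => [|n IH] i j.
  rewrite /psexp /= /ps1 /psmon.
  by case: i => [|i]; case: j => [|j] //=; rewrite bin0 mul1r !expr0 mulr1.
rewrite /psexp iterS -/(psexp _ n) psmul_lin.
case: i => [|i]; case: j => [|j] /=; rewrite ?IH ?mulr0 ?addr0 ?add0r.
- by [].
- rewrite !add0n eqSS; case: eqP => _; rewrite ?mulr0 // !bin0 !expr0 exprS; ring.
- rewrite !addn0 eqSS; case: eqP => [<-|_]; rewrite ?mulr0 // !binn !expr0 exprS; ring.
- rewrite !addSn !addnS !eqSS; case: eqP => _; rewrite ?mulr0 ?addr0 // binS natrD !exprS; ring.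
Qed.

Lemma pscomp_deg n f u v i j : (i + j = n)%N -> in_mpow n f ->
  pscomp f u v i j = \sum_(a < n.+1) f a (n - a)%N * psmul (psexp u a) (psexp v (n - a)) i j.
Proof.
move=> Hij Hf; rewrite /pscomp Hij; apply: eq_bigr => [[a Ha]] _ /=.
rewrite subSn; last by rewrite -ltnS.
rewrite big_ord_recr /= big1 ?add0r // => [[b Hb]] _ /=.
by rewrite Hf ?mul0r //; rewrite -ltn_subRL.
Qed.

Definition E (a b : F) (m i j : nat) : F :=
  if (i + j == m)%N then 'C(m, i)%:R * (a ^+ i * b ^+ j) else 0.

Lemma psmul_exps a b c d m n i j :
  psmul (psexp (lin a b) m) (psexp (lin c d) n) i j =
  \sum_(k < i.+1) \sum_(l < j.+1) E a b m k l * E c d n (i - k)%N (j - l)%N.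
Proof.
rewrite /psmul; apply: eq_bigr => k _; apply: eq_bigr => l _.
by rewrite !psexp_lin.
Qed.

Record cub := Cub { k0 : F; k1 : F; k2 : F; k3 : F }.
Definition cubof f := Cub (f 3 0)%N (f 2 1)%N (f 1 2)%N (f 0 3)%N.
Definition sub (P : cub) (a b c d : F) :=
  let: Cub p0 p1 p2 p3 := P in
  Cub (p0 * a^+3 + p1 * (a^+2 * c) + p2 * (a * c^+2) + p3 * c^+3)
      (p0 * (3%:R * a^+2 * b) + p1 * (a^+2 * d + 2%:R * a * b * c) + p2 * (2%:R * a * c * d + b * c^+2) + p3 * (3%:R * c^+2 * d))
      (p0 * (3%:R * a * b^+2) + p1 * (2%:R * a * b * d + b^+2 * c) + p2 * (a * d^+2 + 2%:R * b * c * d) + p3 * (3%:R * c * d^+2))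
      (p0 * b^+3 + p1 * (b^+2 * d) + p2 * (b * d^+2) + p3 * d^+3).

Arguments psexp : simpl never.
Arguments psmul : simpl never.
Ltac nsimpl := rewrite ?subSS ?subn0 ?subnn /=.

Lemma C32 : 'C(3, 2) = 3%N. Proof. by []. Qed.

Lemma pscomp3 f a b c d : in_mpow 3 f ->
  let: Cub e0 e1 e2 e3 := sub (cubof f) a b c d in
  [/\ pscomp f (lin a b) (lin c d) 3 0 = e0, pscomp f (lin a b) (lin c d) 2 1 = e1,
      pscomp f (lin a b) (lin c d) 1 2 = e2 & pscomp f (lin a b) (lin c d) 0 3 = e3].
Proof.
move=> Hf /=; split;
  rewrite (@pscomp_deg 3) // !big_ord_recr big_ord0 /=; nsimpl;
  rewrite !psmul_exps !big_ord_recr !big_ord0 /=; nsimpl;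
  rewrite /E /= ?binn ?bin0 ?bin1 ?C32; ring.
Qed.

Lemma pscomp_low f u v i j : (i + j < 3)%N -> in_mpow 3 f -> pscomp f u v i j = 0.
Proof.
move=> Hij Hf; rewrite /pscomp big1 // => [[a Ha]] _ /=; rewrite big1 // => [[b Hb]] _ /=.
rewrite Hf ?mul0r //; move: Hb Hij; lia.
Qed.

Definition cst (u : F) : ps F := psscale u (ps1 F).
Lemma psmul_cst u h i j : psmul (cst u) h i j = u * h i j.
Proof. by rewrite /cst psmul_scalel /ps1 psmul_mon /= !subn0. Qed.

Definition lc (m1 : F) (P : cub) (m2 : F) (Q : cub) :=
  Cub (m1 * k0 P + m2 * k0 Q) (m1 * k1 P + m2 * k1 Q) (m1 * k2 P + m2 * k2 Q) (m1 * k3 P + m2 * k3 Q).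
Definition act (m11 m12 m21 m22 a b c d : F) (p : cub * cub) :=
  (lc m11 (sub p.1 a b c d) m12 (sub p.2 a b c d), lc m21 (sub p.1 a b c d) m22 (sub p.2 a b c d)).
Definition rel (p q : cub * cub) := exists m11 m12 m21 m22 a b c d,
  [/\ m11 * m22 - m12 * m21 != 0, a * d - b * c != 0 & q = act m11 m12 m21 m22 a b c d p].

Lemma key (f g : ps2 F) : in_mpow 3 f.1 -> in_mpow 3 f.2 -> in_mpow 3 g.1 -> in_mpow 3 g.2 ->
  rel (cubof f.1, cubof f.2) (cubof g.1, cubof g.2) -> Kequiv 3 f g.
Proof.
move=> H1 H2 G1 G2 [m11 [m12 [m21 [m22 [a [b [c [d [dM dA E]]]]]]]]].
exists (Mat2 (cst m11) (cst m12) (cst m21) (cst m22)), (lin a b, lin c d); split.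
- by rewrite /GL2 /pssub /psadd /psopp /= !psmul_cst /cst /psscale /ps1 /psmon /= !mulr1.
- rewrite /autR /in_m /lin /psadd /psscale /psmon /=; split; try ring.
  by rewrite (_ : _ - _ = a * d - b * c) //; ring.
- case: E => E1 E2 E3 E4 E5 E6 E7 E8.
  have [A0 A1 A2 A3] := pscomp3 a b c d H1.
  have [B0 B1 B2 B3] := pscomp3 a b c d H2.
  split => i j; rewrite /jet /cact /= /psadd !psmul_cst; case: leqP => // Hij;
  (case: (ltnP (i + j) 3) => Hl;
    [by rewrite !pscomp_low // ?G1 ?G2 // !mulr0 addr0 |]);
  have Hij3 : (i + j = 3)%N by apply/eqP; rewrite eqn_leq Hij Hl.
  + move: Hij3 {Hij Hl}; case: i => [|[|[|[|i]]]]; case: j => [|[|[|[|j]]]] //= _;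
    by rewrite ?A0 ?A1 ?A2 ?A3 ?B0 ?B1 ?B2 ?B3 ?E1 ?E2 ?E3 ?E4.
  + move: Hij3 {Hij Hl}; case: i => [|[|[|[|i]]]]; case: j => [|[|[|[|j]]]] //= _;
    by rewrite ?A0 ?A1 ?A2 ?A3 ?B0 ?B1 ?B2 ?B3 ?E5 ?E6 ?E7 ?E8.
Qed.

Lemma cubP p0 p1 p2 p3 q0 q1 q2 q3 : p0 = q0 -> p1 = q1 -> p2 = q2 -> p3 = q3 ->
  Cub p0 p1 p2 p3 = Cub q0 q1 q2 q3.
Proof. by move=> -> -> -> ->. Qed.

Lemma sub_lc m1 P m2 Q a b c d :
  sub (lc m1 P m2 Q) a b c d = lc m1 (sub P a b c d) m2 (sub Q a b c d).
Proof. case: P => p0 p1 p2 p3; case: Q => q0 q1 q2 q3; rewrite /lc /=; apply: cubP; ring. Qed.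

Lemma sub_sub P a1 b1 c1 d1 a2 b2 c2 d2 :
  sub (sub P a1 b1 c1 d1) a2 b2 c2 d2 =
  sub P (a1 * a2 + b1 * c2) (a1 * b2 + b1 * d2) (c1 * a2 + d1 * c2) (c1 * b2 + d1 * d2).
Proof. case: P => p0 p1 p2 p3; rewrite /lc /=; apply: cubP; ring. Qed.

Lemma lc_lc m1 n1 P m2 n2 Q u1 u2 :
  lc u1 (lc m1 P n1 Q) u2 (lc m2 P n2 Q) = lc (u1 * m1 + u2 * m2) P (u1 * n1 + u2 * n2) Q.
Proof. case: P => p0 p1 p2 p3; case: Q => q0 q1 q2 q3; rewrite /lc /=; apply: cubP; ring. Qed.

Lemma rel_trans p q r : rel p q -> rel q r -> rel p r.
Proof.
move=> [m11 [m12 [m21 [m22 [a [b [c [d [dM dA ->]]]]]]]]].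
move=> [n11 [n12 [n21 [n22 [a' [b' [c' [d' [dN dA' ->]]]]]]]]].
exists (n11 * m11 + n12 * m21), (n11 * m12 + n12 * m22), (n21 * m11 + n22 * m21), (n21 * m12 + n22 * m22).
exists (a * a' + b * c'), (a * b' + b * d'), (c * a' + d * c'), (c * b' + d * d'); split.
- rewrite (_ : _ - _ = (n11 * n22 - n12 * n21) * (m11 * m22 - m12 * m21)); first exact: mulf_neq0.
  ring.
- rewrite (_ : _ - _ = (a * d - b * c) * (a' * d' - b' * c')); first exact: mulf_neq0.
  ring.
- by rewrite /act; cbn [fst snd]; rewrite !sub_lc !sub_sub !lc_lc.
Qed.

Lemma rel_refl p : rel p p.
Proof.
exists 1, 0, 0, 1, 1, 0, 0, 1; split; rewrite ?mulr1 ?mulr0 ?subr0 ?oner_neq0 //.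
case: p => [[p0 p1 p2 p3] [q0 q1 q2 q3]]; rewrite /act /lc /=; congr pair; apply: cubP; ring.
Qed.

Lemma rel_sub p a b c d : a * d - b * c != 0 -> rel p (sub p.1 a b c d, sub p.2 a b c d).
Proof.
move=> dA; exists 1, 0, 0, 1, a, b, c, d; split; rewrite ?mulr1 ?mulr0 ?subr0 ?oner_neq0 //.
case: p => [[p0 p1 p2 p3] [q0 q1 q2 q3]]; rewrite /act /lc /=; congr pair; apply: cubP; ring.
Qed.

Lemma rel_mix p m11 m12 m21 m22 : m11 * m22 - m12 * m21 != 0 ->
  rel p (lc m11 p.1 m12 p.2, lc m21 p.1 m22 p.2).
Proof.
move=> dM; exists m11, m12, m21, m22, 1, 0, 0, 1; split; rewrite ?mulr1 ?mulr0 ?subr0 ?oner_neq0 //.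
case: p => [[p0 p1 p2 p3] [q0 q1 q2 q3]]; rewrite /act /lc /=; congr pair; apply: cubP; ring.
Qed.
End PS.

Section Cl.
Variable F : closedFieldType.

Lemma root_gen n (c : nat -> F) : (0 < n)%N -> c n != 0 ->
  exists t : F, \sum_(i < n.+1) c i * t ^+ i = 0.
Proof.
move=> n0 cn.
have [x Hx] := @solve_monicpoly F n (fun i => - c i / c n) n0.
exists x; rewrite big_ord_recr /= Hx mulr_sumr -big_split /= big1 // => i _.
by field.
Qed.

Lemma root_n n (e : F) : (0 < n)%N -> exists x : F, x ^+ n = e.
Proof.
case: n => // n _.
have [x Hx] := @solve_monicpoly F n.+1 (fun i => if i == 0%N then e else 0) isT.
exists x; rewrite Hx big_ord_recl /= expr0 mulr1 big1 ?addr0 // => i _.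
by rewrite mul0r.
Qed.

Definition nf (N : cub F * cub F) : Prop :=
  N = (Cub 1 0 0 0, Cub 0 0 0 0) \/ N = (Cub 1 0 0 0, Cub 0 1 0 0) \/
  N = (Cub 1 0 0 0, Cub 0 0 1 0) \/ N = (Cub 1 0 0 0, Cub 0 1 0 1) \/
  N = (Cub 1 0 0 0, Cub 0 0 0 1) \/ N = (Cub 0 1 0 0, Cub 0 0 0 0) \/
  N = (Cub 0 1 0 0, Cub 0 0 1 0) \/ N = (Cub 0 1 0 0, Cub 1 0 1 0) \/
  (exists2 l : F, l != 0 & N = (Cub 1 1 0 0, Cub 0 l 0 1)) \/
  N = (Cub 0 1 0 0, Cub 1 0 0 1) \/ N = (Cub 1 0 1 0, Cub 0 0 0 0).

Definition good (p : cub F * cub F) := exists N, nf N /\ rel p N.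

Lemma good_nf N : nf N -> good N.
Proof. by move=> H; exists N; split => //; apply: rel_refl. Qed.

Lemma good_rel p q : rel p q -> good q -> good p.
Proof. by move=> H [N [HN H']]; exists N; split => //; apply: rel_trans H H'. Qed.

Lemma good_sub p q a b c d : a * d - b * c != 0 ->
  (sub p.1 a b c d, sub p.2 a b c d) = q -> good q -> good p.
Proof. by move=> H <-; apply: good_rel; apply: rel_sub. Qed.

Lemma good_mix p q m11 m12 m21 m22 : m11 * m22 - m12 * m21 != 0 ->
  (lc m11 p.1 m12 p.2, lc m21 p.1 m22 p.2) = q -> good q -> good p.
Proof. by move=> H <-; apply: good_rel; apply: rel_mix. Qed.

Ltac eqp := rewrite /sub /lc /=; congr pair; apply: cubP.

Ltac nz := repeat match goal with
 | |- is_true (_ * _ != 0) => apply: mulf_neq0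
 | |- is_true (_^-1 != 0) => rewrite invr_eq0
 | |- is_true (_ ^+ _ != 0) => apply: expf_neq0
 | |- is_true (- _ != 0) => rewrite oppr_eq0
 | |- is_true (1 != 0) => exact: oner_neq0
 end; try done.
Ltac dt := rewrite ?mulr1 ?mul1r ?mul0r ?mulr0 ?subr0 ?sub0r; nz.
Ltac fld := field; repeat (apply/andP; split); by [].

Lemma expf_neq0' (t e : F) n : t ^+ n.+1 = e -> e != 0 -> t != 0.
Proof. move=> <-; apply: contra => /eqP ->; by rewrite expr0n. Qed.

Lemma det1 : (1 : F) * 1 - 0 * 0 != 0.
Proof. by dt. Qed.

Lemma L_x3 (h2 : 2%:R != 0 :> F) (h3 : 3%:R != 0 :> F) (S : cub F) : good (Cub 1 0 0 0, S).
Proof.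
case: S => s0 s1 s2 s3.
apply: (good_mix (m11 := 1) (m12 := 0) (m21 := - s0) (m22 := 1)
   (q := (Cub 1 0 0 0, Cub 0 s1 s2 s3))).
  by dt.
  eqp; ring.
have [Hs3|Hs3] := eqVneq s3 0.
  subst s3.
  have [Hs2|Hs2] := eqVneq s2 0.
    subst s2.
    have [Hs1|Hs1] := eqVneq s1 0.
      subst s1; apply: good_nf; by left.
    apply: (good_mix (m11 := 1) (m12 := 0) (m21 := 0) (m22 := s1^-1)
      (q := (Cub 1 0 0 0, Cub 0 1 0 0))).
      by dt.
      eqp; fld.
    apply: good_nf; do 1 right; by left.
  pose c := - s1 / (2%:R * s2).
  pose e0 := s1 * c + s2 * c ^+ 2.
  apply: (good_sub (a := 1) (b := 0) (c := c) (d := 1)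
     (q := (Cub 1 0 0 0, Cub e0 0 s2 0))); first by dt.
    eqp; rewrite /e0 /c; fld.
  apply: (good_mix (m11 := 1) (m12 := 0) (m21 := - e0 / s2) (m22 := s2^-1)
     (q := (Cub 1 0 0 0, Cub 0 0 1 0))).
    by dt.
    eqp; fld.
  apply: good_nf; do 2 right; by left.
pose c := - s2 / (3%:R * s3).
pose e0 := s1 * c + s2 * c ^+ 2 + s3 * c ^+ 3.
pose e1 := s1 + 2%:R * s2 * c + 3%:R * s3 * c ^+ 2.
apply: (good_sub (a := 1) (b := 0) (c := c) (d := 1)
   (q := (Cub 1 0 0 0, Cub e0 e1 0 s3))); first by dt.
  eqp; rewrite /e0 /e1 /c; fld.
apply: (good_mix (m11 := 1) (m12 := 0) (m21 := - e0) (m22 := 1)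
   (q := (Cub 1 0 0 0, Cub 0 e1 0 s3))).
  by dt.
  eqp; ring.
have [He1|He1] := eqVneq e1 0.
  rewrite He1.
  apply: (good_mix (m11 := 1) (m12 := 0) (m21 := 0) (m22 := s3^-1)
    (q := (Cub 1 0 0 0, Cub 0 0 0 1))).
    by dt.
    eqp; fld.
  apply: good_nf; do 4 right; by left.
have [t Ht] := @root_n 2%N (s3 / e1) isT.
have t0 : t != 0 by apply: (expf_neq0' Ht); rewrite mulf_neq0 ?invr_neq0.
apply: (good_sub (a := t) (b := 0) (c := 0) (d := 1)
   (q := (Cub (t ^+ 3) 0 0 0, Cub 0 s3 0 s3))).
  by dt.
  eqp; rewrite ?Ht; fld.
apply: (good_mix (m11 := (t ^+ 3)^-1) (m12 := 0) (m21 := 0) (m22 := s3^-1)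
   (q := (Cub 1 0 0 0, Cub 0 1 0 1))).
  by dt.
  eqp; fld.
apply: good_nf; do 3 right; by left.
Qed.
Lemma L_x2y (h2 : 2%:R != 0 :> F) (h3 : 3%:R != 0 :> F) (S : cub F) : good (Cub 0 1 0 0, S).
Proof.
case: S => s0 s1 s2 s3.
apply: (good_mix (m11 := 1) (m12 := 0) (m21 := - s1) (m22 := 1)
   (q := (Cub 0 1 0 0, Cub s0 0 s2 s3))).
  by dt.
  eqp; ring.
have [Hs3|Hs3] := eqVneq s3 0.
  subst s3.
  have [Hs2|Hs2] := eqVneq s2 0.
    subst s2.
    have [Hs0|Hs0] := eqVneq s0 0.
      subst s0; apply: good_nf; do 5 right; by left.
    apply: (good_mix (m11 := 0) (m12 := s0^-1) (m21 := 1) (m22 := 0)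
      (q := (Cub 1 0 0 0, Cub 0 1 0 0))).
      by dt.
      eqp; fld.
    apply: good_nf; do 1 right; by left.
  have [Hs0|Hs0] := eqVneq s0 0.
    subst s0.
    apply: (good_mix (m11 := 1) (m12 := 0) (m21 := 0) (m22 := s2^-1)
      (q := (Cub 0 1 0 0, Cub 0 0 1 0))).
      by dt.
      eqp; fld.
    apply: good_nf; do 6 right; by left.
  have [t Ht] := @root_n 2%N (s2 / s0) isT.
  have t0 : t != 0 by apply: (expf_neq0' Ht); rewrite mulf_neq0 ?invr_neq0.
  have -> : s2 = s0 * t ^+ 2 by rewrite Ht; fld.
  apply: (good_sub (a := t) (b := 0) (c := 0) (d := 1)
     (q := (Cub 0 (t ^+ 2) 0 0, Cub (s0 * t ^+ 3) 0 (s0 * t ^+ 3) 0))).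
    by dt.
    eqp; fld.
  apply: (good_mix (m11 := (t ^+ 2)^-1) (m12 := 0) (m21 := 0) (m22 := (s0 * t ^+ 3)^-1)
     (q := (Cub 0 1 0 0, Cub 1 0 1 0))).
    by dt.
    eqp; fld.
  apply: good_nf; do 7 right; by left.
have [Hs2|Hs2] := eqVneq s2 0.
  subst s2.
  have [Hs0|Hs0] := eqVneq s0 0.
    subst s0.
    apply: (good_sub (a := 0) (b := 1) (c := 1) (d := 0)
      (q := (Cub 0 0 1 0, Cub s3 0 0 0))).
      by dt.
      eqp; ring.
    apply: (good_mix (m11 := 0) (m12 := s3^-1) (m21 := 1) (m22 := 0)
      (q := (Cub 1 0 0 0, Cub 0 0 1 0))).
      by dt.
      eqp; fld.
    apply: good_nf; do 2 right; by left.
  have [t Ht] := @root_n 3%N (s3 / s0) isT.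
  have t0 : t != 0 by apply: (expf_neq0' Ht); rewrite mulf_neq0 ?invr_neq0.
  have -> : s3 = s0 * t ^+ 3 by rewrite Ht; fld.
  apply: (good_sub (a := t) (b := 0) (c := 0) (d := 1)
     (q := (Cub 0 (t ^+ 2) 0 0, Cub (s0 * t ^+ 3) 0 0 (s0 * t ^+ 3)))).
    by dt.
    eqp; fld.
  apply: (good_mix (m11 := (t ^+ 2)^-1) (m12 := 0) (m21 := 0) (m22 := (s0 * t ^+ 3)^-1)
     (q := (Cub 0 1 0 0, Cub 1 0 0 1))).
    by dt.
    eqp; fld.
  apply: good_nf; do 9 right; by left.
pose u := - (3%:R * s3) / s2.
have u0 : u != 0 by rewrite /u mulf_neq0 ?oppr_eq0 ?mulf_neq0 ?invr_neq0.
apply: (good_sub (a := u) (b := 0) (c := 0) (d := 1)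
   (q := (Cub 0 (u ^+ 2) 0 0, Cub (s0 * u ^+ 3) 0 (- (3%:R * s3)) s3))).
  by dt.
  eqp; rewrite /u; fld.
pose sg := s0 * u ^+ 3 / s3.
apply: (good_mix (m11 := (u ^+ 2)^-1) (m12 := 0) (m21 := 0) (m22 := s3^-1)
   (q := (Cub 0 1 0 0, Cub sg 0 (- 3%:R) 1))).
  by dt.
  eqp; rewrite /sg; fld.
apply: (good_sub (a := 1) (b := 0) (c := 1) (d := 1)
   (q := (Cub 1 1 0 0, Cub (sg - 2%:R) (- 3%:R) 0 1))).
  by dt.
  eqp; ring.
apply: (good_mix (m11 := 1) (m12 := 0) (m21 := - (sg - 2%:R)) (m22 := 1)
   (q := (Cub 1 1 0 0, Cub 0 (- 1 - sg) 0 1))).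
  by dt.
  eqp; ring.
have [Hl|Hl] := eqVneq (- 1 - sg) 0.
  rewrite Hl.
  apply: (good_sub (a := 0) (b := 1) (c := 1) (d := 0)
    (q := (Cub 0 0 1 1, Cub 1 0 0 0))).
    by dt.
    eqp; ring.
  apply: (good_mix (m11 := 0) (m12 := 1) (m21 := 1) (m22 := 0)
    (q := (Cub 1 0 0 0, Cub 0 0 1 1))).
    by dt.
    eqp; ring.
  exact: L_x3.
apply: good_nf; do 8 right; left; by exists (- 1 - sg).
Qed.

Lemma sub_id (P : cub F) : sub P 1 0 0 1 = P.
Proof. case: P => p0 p1 p2 p3 /=; apply: cubP; ring. Qed.

Lemma sub_inj0 (P : cub F) a b c d : a * d - b * c != 0 ->
  sub P a b c d = Cub 0 0 0 0 -> P = Cub 0 0 0 0.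
Proof.
move=> dA E.
have H := sub_sub P a b c d (d / (a * d - b * c)) (- b / (a * d - b * c))
  (- c / (a * d - b * c)) (a / (a * d - b * c)).
rewrite E in H.
have e1 : a * (d / (a * d - b * c)) + b * (- c / (a * d - b * c)) = 1 by fld.
have e2 : a * (- b / (a * d - b * c)) + b * (a / (a * d - b * c)) = 0 by fld.
have e3 : c * (d / (a * d - b * c)) + d * (- c / (a * d - b * c)) = 0 by fld.
have e4 : c * (- b / (a * d - b * c)) + d * (a / (a * d - b * c)) = 1 by fld.
rewrite e1 e2 e3 e4 sub_id in H.
rewrite -H /=; apply: cubP; ring.
Qed.

Lemma L_double (h2 : 2%:R != 0 :> F) (h3 : 3%:R != 0 :> F) (r0 r1 : F) (S : cub F) :
  (r0 != 0) || (r1 != 0) -> good (Cub r0 r1 0 0, S).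
Proof.
move=> Hr.
have [Hr1|Hr1] := eqVneq r1 0.
  subst r1; rewrite eqxx orbF in Hr.
  apply: (good_mix (m11 := r0^-1) (m12 := 0) (m21 := 0) (m22 := 1)
     (q := (Cub 1 0 0 0, S))).
    by dt.
    case: S => s0 s1 s2 s3; eqp; fld.
  exact: L_x3.
apply: (good_sub (a := 1) (b := 0) (c := - r0 / r1) (d := r1^-1)
   (q := (Cub 0 1 0 0, sub S 1 0 (- r0 / r1) r1^-1))).
  by dt.
  case: S => s0 s1 s2 s3; eqp; fld.
exact: L_x2y.
Qed.

Definition ev (P : cub F) x y := k0 P * x ^+ 3 + k1 P * x ^+ 2 * y + k2 P * x * y ^+ 2 + k3 P * y ^+ 3.
Definition dx (P : cub F) x y := 3%:R * k0 P * x ^+ 2 + 2%:R * k1 P * x * y + k2 P * y ^+ 2.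
Definition dy (P : cub F) x y := k1 P * x ^+ 2 + 2%:R * k2 P * x * y + 3%:R * k3 P * y ^+ 2.

Lemma euler (P : cub F) x y : 3%:R * ev P x y = x * dx P x y + y * dy P x y.
Proof. rewrite /ev /dx /dy; ring. Qed.

Lemma L_root (h2 : 2%:R != 0 :> F) (h3 : 3%:R != 0 :> F) (R S : cub F) (w1 w2 : F) :
  (w1 != 0) || (w2 != 0) -> R <> Cub 0 0 0 0 -> dx R w1 w2 = 0 -> dy R w1 w2 = 0 ->
  good (R, S).
Proof.
move=> Hw HR Hx Hy.
have Hev : ev R w1 w2 = 0.
  by apply: (mulfI h3); rewrite mulr0 euler Hx Hy !mulr0 addr0.
have [Hw2|Hw2] := eqVneq w2 0.
  subst w2; rewrite eqxx orbF in Hw.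
  have dA : (0 : F) * 0 - w1 * 1 != 0 by dt.
  apply: (good_sub (a := 0) (b := w1) (c := 1) (d := 0)
     (q := (sub R 0 w1 1 0, sub S 0 w1 1 0))) => //.
  have E : sub R 0 w1 1 0 = Cub (k0 (sub R 0 w1 1 0)) (k1 (sub R 0 w1 1 0)) 0 0.
    case: R HR Hx Hy Hev => r0 r1 r2 r3 /= _ Hx Hy Hev; apply: cubP => //.
      by rewrite -[RHS]Hy /dy /=; ring.
    by rewrite -[RHS]Hev /ev /=; ring.
  rewrite E; apply: L_double => //.
  have [H0|H0] := eqVneq (k0 (sub R 0 w1 1 0)) 0; last by [].
  have [H1|H1] := eqVneq (k1 (sub R 0 w1 1 0)) 0; last by rewrite orbT.
  exfalso; apply: HR; apply: (sub_inj0 dA).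
  by rewrite E H0 H1.
have dA : (1 : F) * w2 - w1 * 0 != 0 by dt.
apply: (good_sub (a := 1) (b := w1) (c := 0) (d := w2)
   (q := (sub R 1 w1 0 w2, sub S 1 w1 0 w2))) => //.
have E : sub R 1 w1 0 w2 = Cub (k0 (sub R 1 w1 0 w2)) (k1 (sub R 1 w1 0 w2)) 0 0.
  case: R HR Hx Hy Hev => r0 r1 r2 r3 /= _ Hx Hy Hev; apply: cubP => //.
    by rewrite -[RHS]Hx /dx /=; ring.
  by rewrite -[RHS]Hev /ev /=; ring.
rewrite E; apply: L_double => //.
have [H0|H0] := eqVneq (k0 (sub R 1 w1 0 w2)) 0; last by [].
have [H1|H1] := eqVneq (k1 (sub R 1 w1 0 w2)) 0; last by rewrite orbT.
exfalso; apply: HR; apply: (sub_inj0 dA).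
by rewrite E H0 H1.
Qed.
Lemma L_single' (h2 : 2%:R != 0 :> F) (h3 : 3%:R != 0 :> F) (q0 q1 q2 : F) :
  Cub q0 q1 q2 0 <> Cub 0 0 0 0 -> good (Cub q0 q1 q2 0, Cub 0 0 0 0).
Proof.
move=> H.
have [Hq2|Hq2] := eqVneq q2 0.
  subst q2; apply: L_double => //.
  have [H0|H0] := eqVneq q0 0; last by [].
  have [H1|H1] := eqVneq q1 0; last by rewrite orbT.
  by exfalso; apply: H; rewrite H0 H1.
pose c := - q1 / (2%:R * q2).
pose e := q0 + q1 * c + q2 * c ^+ 2.
apply: (good_sub (a := 1) (b := 0) (c := c) (d := 1)
   (q := (Cub e 0 q2 0, Cub 0 0 0 0))).
  by dt.
  eqp; rewrite /e /c; fld.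
have [He|He] := eqVneq e 0.
  rewrite He.
  apply: (good_sub (a := 0) (b := 1) (c := 1) (d := 0)
     (q := (Cub 0 q2 0 0, Cub 0 0 0 0))).
    by dt.
    eqp; ring.
  by apply: L_double => //; rewrite Hq2 orbT.
have [t Ht] := @root_n 2%N (e / q2) isT.
have t0 : t != 0 by apply: (expf_neq0' Ht); rewrite mulf_neq0 ?invr_neq0.
apply: (good_sub (a := 1) (b := 0) (c := 0) (d := t)
   (q := (Cub e 0 e 0, Cub 0 0 0 0))).
  by dt.
  eqp; rewrite ?Ht; fld.
apply: (good_mix (m11 := e^-1) (m12 := 0) (m21 := 0) (m22 := 1)
   (q := (Cub 1 0 1 0, Cub 0 0 0 0))).
  by dt.
  eqp; fld.
apply: good_nf; do 10 right; by [].
Qed.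

Lemma L_single (h2 : 2%:R != 0 :> F) (h3 : 3%:R != 0 :> F) (P : cub F) :
  P <> Cub 0 0 0 0 -> good (P, Cub 0 0 0 0).
Proof.
case: P => p0 p1 p2 p3 HP.
have [Hp0|Hp0] := eqVneq p0 0.
  subst p0.
  apply: (good_sub (a := 0) (b := 1) (c := 1) (d := 0)
     (q := (Cub p3 p2 p1 0, Cub 0 0 0 0))).
    by dt.
    eqp; ring.
  apply: L_single' => // E; apply: HP; case: E => -> -> ->; by [].
have [t Ht] := @root_gen 3 (fun i => if i == 0%N then p3 else if i == 1%N then p2
   else if i == 2%N then p1 else p0) isT Hp0.
move: Ht; rewrite !big_ord_recr big_ord0 /= => Ht.
apply: (good_sub (a := 1) (b := t) (c := 0) (d := 1)
   (q := (sub (Cub p0 p1 p2 p3) 1 t 0 1, Cub 0 0 0 0))).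
  by dt.
  rewrite /=; congr pair; apply: cubP; ring.
set P' := sub _ _ _ _ _.
have E : P' = Cub (k0 P') (k1 P') (k2 P') 0.
  rewrite /P' /=; apply: cubP => //; rewrite -[RHS]Ht; ring.
rewrite E; apply: L_single' => // E0.
apply: HP; apply: (@sub_inj0 _ 1 t 0 1); first by dt.
rewrite -/P' E; exact: E0.
Qed.
Lemma dx_lc m1 P m2 Q x y : dx (lc m1 P m2 Q) x y = m1 * dx P x y + m2 * dx Q x y.
Proof. rewrite /dx /lc /=; ring. Qed.
Lemma dy_lc m1 P m2 Q x y : dy (lc m1 P m2 Q) x y = m1 * dy P x y + m2 * dy Q x y.
Proof. rewrite /dy /lc /=; ring. Qed.

Lemma lc01 (P Q : cub F) : lc 0 P 1 Q = Q.
Proof. case: P; case: Q => *; rewrite /lc /=; apply: cubP; ring. Qed.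

Definition dep (P Q : cub F) := exists t, Q = Cub (t * k0 P) (t * k1 P) (t * k2 P) (t * k3 P).

Lemma L_jac (h2 : 2%:R != 0 :> F) (h3 : 3%:R != 0 :> F) (P Q : cub F) (w1 w2 : F) :
  P <> Cub 0 0 0 0 -> ~ dep P Q -> (w1 != 0) || (w2 != 0) ->
  dx P w1 w2 * dy Q w1 w2 - dy P w1 w2 * dx Q w1 w2 = 0 -> good (P, Q).
Proof.
move=> HP ND Hw HJ.
have Rnz : forall l, lc 1 P (- l) Q <> Cub 0 0 0 0.
  move=> l; case: P HP ND {HJ} => p0 p1 p2 p3 HP; case: Q => q0 q1 q2 q3 ND.
  rewrite /lc /= => [[E0 E1 E2 E3]].
  have [Hl|Hl] := eqVneq l 0.
    subst l; apply: HP; apply: cubP.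
    by rewrite -E0; ring. by rewrite -E1; ring. by rewrite -E2; ring. by rewrite -E3; ring.
  apply: ND; exists l^-1 => /=; apply: cubP.
  - have -> : p0 = l * q0 by rewrite -[LHS]subr0 -E0; ring.
    by fld.
  - have -> : p1 = l * q1 by rewrite -[LHS]subr0 -E1; ring.
    by fld.
  - have -> : p2 = l * q2 by rewrite -[LHS]subr0 -E2; ring.
    by fld.
  - have -> : p3 = l * q3 by rewrite -[LHS]subr0 -E3; ring.
    by fld.
have [Hqx|Hqx] := eqVneq (dx Q w1 w2) 0.
  have [Hqy|Hqy] := eqVneq (dy Q w1 w2) 0.
    apply: (good_mix (m11 := 0) (m12 := 1) (m21 := 1) (m22 := 0) (q := (Q, P))).
      by dt.
      case: P {HP ND Rnz HJ} => p0 p1 p2 p3; case: Q {Hqx Hqy} => q0 q1 q2 q3.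
      eqp; ring.
    apply: (@L_root h2 h3 _ _ w1 w2) => // EQ.
    apply: ND; exists 0; rewrite EQ; apply: cubP; ring.
  pose l := dy P w1 w2 / dy Q w1 w2.
  apply: (good_mix (m11 := 1) (m12 := - l) (m21 := 0) (m22 := 1)
     (q := (lc 1 P (- l) Q, Q))).
    by dt.
    by rewrite /= lc01.
  apply: (@L_root h2 h3 _ _ w1 w2) => //.
    rewrite dx_lc /l Hqx.
    have -> : dx P w1 w2 = dy P w1 w2 * dx Q w1 w2 / dy Q w1 w2.
      apply: (mulIf Hqy); rewrite mulfVK //.
      by apply/eqP; rewrite -subr_eq0 HJ.
    rewrite Hqx; fld.
  by rewrite dy_lc /l; fld.
pose l := dx P w1 w2 / dx Q w1 w2.
apply: (good_mix (m11 := 1) (m12 := - l) (m21 := 0) (m22 := 1)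
   (q := (lc 1 P (- l) Q, Q))).
  by dt.
  by rewrite /= lc01.
apply: (@L_root h2 h3 _ _ w1 w2) => //.
  by rewrite dx_lc /l; fld.
rewrite dy_lc /l.
have -> : dy P w1 w2 = dx P w1 w2 * dy Q w1 w2 / dx Q w1 w2.
  apply: (mulIf Hqx); rewrite mulfVK //.
  by apply/eqP; rewrite -subr_eq0 -oppr_eq0 opprB HJ.
fld.
Qed.
Lemma L_pair (h2 : 2%:R != 0 :> F) (h3 : 3%:R != 0 :> F) (P Q : cub F) :
  P <> Cub 0 0 0 0 -> good (P, Q).
Proof.
move=> HP.
case: (classic (dep P Q)) => [[t Et]|ND].
  apply: (good_mix (m11 := 1) (m12 := 0) (m21 := - t) (m22 := 1) (q := (P, Cub 0 0 0 0))).
    by dt.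
    rewrite Et; case: P {HP Et} => p0 p1 p2 p3; eqp; ring.
  exact: L_single.
have [HD|HD] := eqVneq (k0 P * k1 Q - k1 P * k0 Q) 0.
  apply: (@L_jac h2 h3 P Q 1 0) => //; first by rewrite oner_neq0.
  transitivity (3%:R * (k0 P * k1 Q - k1 P * k0 Q)); last by rewrite HD mulr0.
  rewrite /dx /dy; ring.
have [t Ht] := @root_gen 4 (fun i =>
   if i == 0%N then 3%:R * (k2 P * k3 Q - k3 P * k2 Q)
   else if i == 1%N then 6%:R * (k1 P * k3 Q - k3 P * k1 Q)
   else if i == 2%N then 9%:R * (k0 P * k3 Q - k3 P * k0 Q) + 3%:R * (k1 P * k2 Q - k2 P * k1 Q)
   else if i == 3%N then 6%:R * (k0 P * k2 Q - k2 P * k0 Q)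
   else 3%:R * (k0 P * k1 Q - k1 P * k0 Q)) isT (mulf_neq0 h3 HD).
move: Ht; rewrite !big_ord_recr big_ord0 /= => Ht.
apply: (@L_jac h2 h3 P Q t 1) => //; first by rewrite oner_neq0 orbT.
rewrite -[RHS]Ht /dx /dy; ring.
Qed.
End Cl.

Section Final.
Variable F : closedFieldType.

Definition psc (P : cub F) : ps F := fun i j =>
  if (i == 3%N) && (j == 0%N) then k0 P else if (i == 2%N) && (j == 1%N) then k1 P
  else if (i == 1%N) && (j == 2%N) then k2 P else if (i == 0%N) && (j == 3%N) then k3 P else 0.

Lemma cubof_psc P : cubof (psc P) = P.
Proof. by case: P. Qed.

Lemma psc_low P : in_mpow 3 (psc P).
Proof. move=> i j; rewrite /psc; case: i => [|[|[|[|i]]]]; case: j => [|[|[|[|j]]]] //. Qed.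

Lemma psc_dec P i j : psc P i j = k0 P * psmon F 3 0 i j + k1 P * psmon F 2 1 i j
   + k2 P * psmon F 1 2 i j + k3 P * psmon F 0 3 i j.
Proof.
rewrite /psc /psmon; case: i => [|[|[|[|i]]]]; case: j => [|[|[|[|j]]]] /=; ring.
Qed.

Ltac fin_nf := split => i j; cbn [fst snd]; rewrite psc_dec /psadd /psscale /ps0 /pX3 /pX2Y /pXY2 /pY3 /=; ring.

Lemma nf_ps N : nf N -> exists g : ps2 F,
  [/\ normal_form3 g, in_mpow 3 g.1, in_mpow 3 g.2 & (cubof g.1, cubof g.2) = N].
Proof.
move=> HN; exists (psc N.1, psc N.2); split; [|exact: psc_low|exact: psc_low|].
2: by rewrite !cubof_psc; case: N {HN}.
rewrite /normal_form3.
case: HN => [->|[->|[->|[->|[->|[->|[->|[->|[[l l0 ->]|[->|->]]]]]]]]]].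
- do 0 right; left; fin_nf.
- do 1 right; left; fin_nf.
- do 2 right; left; fin_nf.
- do 3 right; left; fin_nf.
- do 4 right; left; fin_nf.
- do 5 right; left; fin_nf.
- do 6 right; left; fin_nf.
- do 7 right; left; fin_nf.
- do 8 right; left; exists l => //; fin_nf.
- do 9 right; left; fin_nf.
- do 10 right; fin_nf.
Qed.

End Final.

Unset Implicit Arguments.

Theorem proposition5p1 (F : closedFieldType)
  (hchar : forall p : nat, p \in [pchar F] -> (3 < p)%N)
  (f : ps2 F) :
  ICIS f -> unimodal f -> ps_ord_eq f.1 3 -> ps_ord_ge f.2 3 ->
  exists g : ps2 F, normal_form3 g /\ Kequiv 3 f g.
Proof.
move=> _ _ [H1 [i [j [Hij Hnz]]]] H2.
have h2 : 2%:R != 0 :> F.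
  apply/negP => H; have := hchar 2%N; rewrite inE /= H => /(_ isT); by [].
have h3 : 3%:R != 0 :> F.
  apply/negP => H; have := hchar 3%N; rewrite inE /= H => /(_ isT); by [].
have HP : cubof f.1 <> Cub 0 0 0 0.
  case=> E0 E1 E2 E3; move: Hnz Hij.
  case: i => [|[|[|[|i]]]]; case: j => [|[|[|[|j]]]] //=;
    rewrite ?E0 ?E1 ?E2 ?E3 ?eqxx //; lia.
have [N [HN Hrel]] := L_pair h2 h3 (cubof f.2) HP.
have [g [Hg G1 G2 EN]] := nf_ps HN.
exists g; split => //.
apply: key => //.
by rewrite EN.
Qed.
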